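(* There is a universal constant $C$ such that for every prime $p$, every positive integer $k$, and every pair of distinct $g_0,g_1\in\mathbb{Z}_p$, there is a $k$-party, one-round, deterministic protocol for the $k$-party Sum-Distinguish problem over $\mathbb{Z}_p$ relative to $g_0,g_1$ with total communication complexity at most $k\log k + C\cdot k$.
   Context: Model: parties $P_1,\dots,P_k$ each hold an input $x_i\in\mathbb{Z}_p$; a coordinator (distinct from the parties) wants to compute $f(x_1,\dots,x_k)$. In a one-round protocol each party sends a single message (a bit string depending only on its own input and, for randomized protocols, shared public randomness) to the coordinator, who then outputs a value depending only on the received messages (and the public randomness); there is no other communication. The total communication complexity is the maximum over inputs of the total number of bits sent by all parties. Sum-Distinguish relative to distinct $g_0,g_1\in\mathbb{Z}_p$: the partial function $f$ with $f=1$ if $\sum_i x_i\equiv g_1 \pmod p$ and $f=0$ if $\sum_i x_i\equiv g_0\pmod p$ (undefined otherwise); the protocol must output the correct value on every input where $f$ is defined. $\log$ is base 2. *)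

(* Defs.v *)
From Stdlib Require Import Reals.
From mathcomp Require Import all_boot.

Set Implicit Arguments.
Unset Strict Implicit.
Unset Printing Implicit Defensive.

(* A k-party one-round deterministic protocol over Z_p (represented as 'I_p):
   party i sends the bit string  enc i (x i)  (depending only on its own input),
   the coordinator outputs  dec m  where m is the tuple of received messages. *)

Definition messages (k p : nat) (enc : 'I_k -> 'I_p -> seq bool)
  (x : {ffun 'I_k -> 'I_p}) : {ffun 'I_k -> seq bool} :=
  [ffun i => enc i (x i)].

Definition sum_distinguish_correct (k p : nat) (g0 g1 : 'I_p)
  (enc : 'I_k -> 'I_p -> seq bool) (dec : {ffun 'I_k -> seq bool} -> bool) :=
  forall x : {ffun 'I_k -> 'I_p},
    ((\sum_(i < k) (x i : nat)) %% p = g1 -> dec (messages enc x) = true) /\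
    ((\sum_(i < k) (x i : nat)) %% p = g0 -> dec (messages enc x) = false).

Definition total_comm (k p : nat) (enc : 'I_k -> 'I_p -> seq bool) : nat :=
  \max_(x : {ffun 'I_k -> 'I_p}) \sum_(i < k) size (enc i (x i)).

Definition log2 (x : R) : R := Rdiv (ln x) (ln 2).

(* Main.v *)
Require Import Defs.
From Stdlib Require Import Reals Lra.
From mathcomp Require Import all_boot zify.
From Stdlib Require Import Lra.

Lemma expnP m : (2 ^ m)%N = Nat.pow 2 m.
Proof. elim: m => //= m IH. by rewrite expnS IH. Qed.

Lemma log2_ge (k m : nat) : (0 < k)%N -> (2 ^ m <= k)%N -> Rle (INR m) (log2 (INR k)).
Proof.
move=> k0 hm.
have l2 : Rlt 0 (ln 2) by have := ln_lt_2; lra.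
have hk : Rle (pow 2 m) (INR k).
  have -> : pow 2 m = INR (2 ^ m)%N by rewrite expnP pow_INR; congr (pow _ _); simpl; lra.
  by apply: le_INR; apply/leP.
have h2 : Rlt 0 (pow 2 m) by apply: pow_lt; lra.
have hl : Rle (ln (pow 2 m)) (ln (INR k)).
  case: (Rle_lt_or_eq_dec _ _ hk) => [h|<-]; last by apply: Rle_refl.
  by apply: Rlt_le; apply: ln_increasing.
rewrite ln_pow in hl; last lra.
rewrite /log2 /Rdiv.
apply (Rmult_le_reg_r (ln 2)) => //.
rewrite Rmult_assoc Rinv_l; lra.
Qed.

Lemma arith (p k N D S S' Q R R' : nat) : 1 < p -> 0 < k -> 4 * k <= N ->
  D + D <= p <= D + D + 1 -> R <= k * (p - 1) -> R' <= k * (p - 1) ->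
  S * N = Q * p + R -> S' * N = Q * p + R' -> S' = S + D %[mod p] -> False.
Proof.
move=> p1 k0 hN hpD hR hR' eS eS' hm.
have small : forall t, t * N <= k * (p - 1) -> 4 * t <= p - 1.
  move=> t ht. have : k * (4 * t) <= k * (p - 1).
    apply: leq_trans ht. rewrite mulnA mulnC. apply: leq_mul => //. by rewrite mulnC.
  by rewrite leq_pmul2l.
case: (leqP S S') => hSS.
  have ht : (S' - S) * N <= k * (p - 1).
    rewrite mulnBl eS eS'. move: (Q * p) => a. lia.
  have h4 := small _ ht.
  have eS2 : S' = S + (S' - S) by lia.
  move: hm; rewrite eS2 => /eqP; rewrite eqn_modDl => /eqP.
  rewrite !modn_small; lia.
have ht : (S - S') * N <= k * (p - 1).
  rewrite mulnBl eS eS'. move: (Q * p) => a. lia.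
have h4 := small _ ht.
have eS2 : S = S' + (S - S') by lia.
move: (S - S') h4 eS2 => t h4 eS2.
move: hm; rewrite eS2 -addnA -{1}[S']addn0 => /eqP; rewrite eqn_modDl eq_sym.
rewrite mod0n => /dvdnP [j hj].
have : 0 < j < 2.
  apply/andP; split.
    case: j hj => [|j] //=; lia.
  case: j hj => [|[|j]] //= hj; lia.
move=> hj2; have ej : j = 1 by lia.
rewrite ej mul1n in hj. lia.
Qed.
Lemma decomp (k p N : nat) (z : 'I_k -> nat) : 0 < p -> (forall i, z i < p) ->
  exists R, R <= k * (p - 1) /\
    (\sum_(i < k) z i) * N = (\sum_(i < k) (z i * N %/ p)) * p + R.
Proof.
move=> p0 hz; exists (\sum_(i < k) (z i * N %% p)); split.
  apply: leq_trans (_ : \sum_(i < k) (p - 1) <= _).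
    apply: leq_sum => i _. have := ltn_pmod (z i * N) p0. lia.
  by rewrite sum_nat_const card_ord.
rewrite big_distrl big_distrl /= -big_split /=.
by apply: eq_bigr => i _; rewrite -divn_eq.
Qed.

Lemma key2 (p k N c D : nat) (x x' : 'I_k -> nat) :
  1 < p -> 0 < k -> 4 * k <= N -> D = p./2 ->
  c * (\sum_(i < k) x' i) = c * (\sum_(i < k) x i) + D %[mod p] ->
  (forall i, (c * x i %% p) * N %/ p = (c * x' i %% p) * N %/ p) -> False.
Proof.
move=> p1 k0 hN hD hmod hq.
have p0 : 0 < p by lia.
have hpD : D + D <= p <= D + D + 1.
  rewrite hD. have := odd_double_half p. case: (odd p) => /=; lia.
have [R [hR eS]] := decomp k p N (fun i => c * x i %% p) p0 (fun i => ltn_pmod _ p0).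
have [R' [hR' eS']] := decomp k p N (fun i => c * x' i %% p) p0 (fun i => ltn_pmod _ p0).
have eQ : \sum_(i < k) (c * x' i %% p * N %/ p) = \sum_(i < k) (c * x i %% p * N %/ p).
  by apply: eq_bigr => i _; rewrite hq.
rewrite eQ in eS'.
have := arith _ _ _ _ _ _ _ _ _ p1 k0 hN hpD hR hR' eS eS'; apply.
have mS : \sum_(i < k) (c * x i %% p) = c * (\sum_(i < k) x i) %[mod p].
  by rewrite modn_summ big_distrr.
have mS' : \sum_(i < k) (c * x' i %% p) = c * (\sum_(i < k) x' i) %[mod p].
  by rewrite modn_summ big_distrr.
by rewrite mS' hmod -modnDml -mS modnDml.
Qed.

Fixpoint bits (m n : nat) : seq bool :=
  if m is m'.+1 then odd n :: bits m' n./2 else [::].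

Lemma size_bits m n : size (bits m n) = m.
Proof. by elim: m n => [|m IH] n //=; rewrite IH. Qed.

Lemma bits_inj m n n' : n < 2 ^ m -> n' < 2 ^ m -> bits m n = bits m n' -> n = n'.
Proof.
elim: m n n' => [|m IH] n n' /=.
  rewrite expn0 => ? ? _; lia.
move=> hn hn' [ho hb].
have e1 := odd_double_half n. have e2 := odd_double_half n'.
rewrite expnS in hn hn'.
have h1 : n./2 < 2 ^ m by rewrite -addnn in e1; lia.
have h2 : n'./2 < 2 ^ m by rewrite -addnn in e2; lia.
rewrite -e1 -e2 ho (IH _ _ h1 h2 hb) //.
Qed.

Lemma exists_c (p e D : nat) : prime p -> 0 < e < p -> D < p ->
  exists c : nat, (c * e) %% p = D.
Proof.
move=> pr he hD.
have p0 : 0 < p by apply: prime_gt0.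
pose f := fun c : 'I_p => Ordinal (ltn_pmod (c * e) p0).
have cop : coprime p e.
  rewrite prime_coprime //; apply/negP => /(dvdn_leq (proj1 (andP he))); lia.
have finj : injective f.
  have aux : forall c c' : 'I_p, c' <= c -> f c = f c' -> c = c'.
    move=> c c' hle /(congr1 val) /= /eqP.
    rewrite eqn_mod_dvd; last by rewrite leq_mul2r hle orbT.
    rewrite -mulnBl Gauss_dvdl // => hdv.
    apply/val_inj => /=.
    case: (posnP (c - c')) => h; first lia.
    have := dvdn_leq h hdv. have := ltn_ord c. lia.
  move=> c c' h; case: (leqP c' c) => hl; first exact: aux.
  by apply/esym/aux => //; lia.
have := @inj_card_onto _ _ f finj (leqnn _) (Ordinal hD).
case/codomP => c hc. exists c. by have := congr1 val hc.
Qed.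

Theorem theorem3p3 :
  exists C : R,
    forall (p k : nat), prime p -> (0 < k)%N ->
    forall g0 g1 : 'I_p, g0 <> g1 ->
    exists (enc : 'I_k -> 'I_p -> seq bool)
           (dec : {ffun 'I_k -> seq bool} -> bool),
      sum_distinguish_correct g0 g1 enc dec /\
      Rle (INR (total_comm enc)) (Rplus (Rmult (INR k) (log2 (INR k))) (Rmult C (INR k))).
Proof.
exists (INR 3) => p k pr k0 g0 g1 hg.
have p1 : 1 < p by apply: prime_gt1.
have p0 : 0 < p by lia.
pose l := trunc_log 2 k.
have /andP [hl1 hl2] : 2 ^ l <= k < 2 ^ l.+1 by exact: (trunc_log_bounds (isT : 1 < 2) k0).
pose m := l.+3.
pose N := 2 ^ m.
have hN : 4 * k <= N.
  move: hl2; rewrite /N /m !expnS. lia.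
pose D := p./2.
have hD : D < p by rewrite /D; have := odd_double_half p; case: (odd p) => /=; lia.
pose e := (g1 + p - g0) %% p.
have he : 0 < e < p.
  rewrite ltn_pmod // andbT /e.
  have hg' : (g0 : nat) <> g1 by move=> h; apply: hg; apply: val_inj.
  have := ltn_ord g0; have := ltn_ord g1 => l1 l0.
  case: (ltnP g0 g1) => h.
    rewrite -addnBAC; last lia. rewrite modnDr modn_small; lia.
  rewrite modn_small; lia.
have [c hc] := exists_c p e D pr he hD.
pose q := fun xi : nat => (c * xi %% p) * N %/ p.
have hq : forall xi, q xi < 2 ^ m.
  move=> xi. rewrite /q ltn_divLR // mulnC ltn_pmul2l; last by rewrite expn_gt0.
  exact: ltn_pmod.
pose enc := fun (i : 'I_k) (xi : 'I_p) => bits m (q xi).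
exists enc.
exists (fun msg => [exists x : {ffun 'I_k -> 'I_p},
   (messages enc x == msg) && ((\sum_(i < k) (x i : nat)) %% p == g1)]).
split.
  move=> x; split => hs.
    by apply/existsP; exists x; rewrite eqxx hs eqxx.
  apply/negbTE/existsP => -[x' /andP [/eqP hmsg /eqP hs']].
  apply: (key2 p k N c D (fun i => x i : nat) (fun i => x' i : nat) p1 k0 hN erefl).
    have h1 : c * (\sum_(i < k) (x' i : nat)) = c * g1 %[mod p] by rewrite -modnMmr hs'.
    have h2 : c * (\sum_(i < k) (x i : nat)) = c * g0 %[mod p] by rewrite -modnMmr hs.
    have h3 : c * g0 + c * e = c * g1 %[mod p].
      rewrite -mulnDr -modnMmr /e modnDmr.
      rewrite subnKC; last exact: (leq_trans (ltnW (ltn_ord g0)) (leq_addl _ _)).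
      by rewrite modnDr modnMmr.
    by rewrite h1 -modnDml h2 modnDml -hc modnDmr h3.
  move=> i. apply: (bits_inj m _ _ (hq (x i)) (hq (x' i))).
  have := congr1 (fun f : {ffun 'I_k -> seq bool} => f i) hmsg.
  by rewrite /messages /= !ffunE.
have htc : total_comm enc <= k * m.
  apply/bigmax_leqP => x _.
  rewrite (eq_bigr (fun _ => m)); last by move=> i _; rewrite /enc size_bits.
  by rewrite sum_nat_const card_ord.
apply: Rle_trans (_ : Rle (INR (k * m)) _).
  by apply: le_INR; apply/leP.
have hlog := log2_ge k l k0 hl1.
rewrite -multE mult_INR /m !S_INR.
have kpos : Rle 0 (INR k) by apply: pos_INR.
rewrite [INR 0]/=.
have := Rmult_le_compat_l _ _ _ kpos hlog. lra.
Qed.
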